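(* Let $d\ge c\ge 1$ be integers and let $W\in\mathbb{R}^{c\times d}$ satisfy $WW^T=I_c$. Let $\Sigma\in\mathbb{R}^{c\times c}$ be symmetric positive definite and let $R\in\mathcal{O}(c)$ be an orthogonal matrix such that every diagonal coefficient of $R\Sigma R^T$ equals $\operatorname{Tr}(\Sigma)/c$. Let $\epsilon>0$ and let $x_{t_1},x_{t_2}$ be random vectors in $\mathbb{R}^d$ such that $Wx_{t_1}\sim\mathcal{N}(\mathbf{0},\Sigma)$, $Wx_{t_2}\sim\mathcal{N}(\mathbf{0},\Sigma)$ and $\|x_{t_1}-x_{t_2}\|_2\le\epsilon$ almost surely. Let $b_{t_j}=\operatorname{sign}(RWx_{t_j})\in\{-1,1\}^c$ for $j\in\{1,2\}$. Then $$\mathbb{P}\big[\operatorname{dist}_H(b_{t_1},b_{t_2})>0\big]\ \le\ 2\epsilon\sqrt{\frac{2}{\pi}}\;c^{3/2}\,\big(\operatorname{Tr}(\Sigma)\big)^{-1/2}.$$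
   Context: $\operatorname{sign}(x)=1$ if $x\ge 0$ and $-1$ otherwise, applied component-wise to vectors. $\operatorname{dist}_H$ is the Hamming distance (number of coordinates in which two vectors differ). $\mathcal{O}(c)$ is the set of $c\times c$ real orthogonal matrices; $\operatorname{Tr}$ is the trace; $I_c$ is the $c\times c$ identity matrix. *)

(* Defs.v *)
From HB Require Import structures.
From mathcomp Require Import all_boot all_order all_algebra.
From mathcomp Require Import all_classical all_reals all_analysis.
Set Implicit Arguments. Unset Strict Implicit. Unset Printing Implicit Defensive.
Import Order.TTheory GRing.Theory Num.Theory.
Local Open Scope classical_set_scope.
Local Open Scope ring_scope.

Definition sgn {R : realType} (x : R) : R := if 0 <= x then 1 else -1.

Definition sign_vec {R : realType} (n : nat) (v : 'cV[R]_n) : 'cV[R]_n :=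
  \col_i sgn (v i 0).

Definition dist_H {R : realType} (n : nat) (u v : 'cV[R]_n) : nat :=
  #|[set i : 'I_n | u i 0 != v i 0]|.

Definition norm2 {R : realType} (n : nat) (v : 'cV[R]_n) : R :=
  Num.sqrt (\sum_i (v i 0) ^+ 2).

Definition is_symmetric {R : realType} (n : nat) (S : 'M[R]_n) : Prop := S^T = S.

Definition is_pos_def {R : realType} (n : nat) (S : 'M[R]_n) : Prop :=
  is_symmetric S /\ forall u : 'cV[R]_n, u != 0 -> 0 < (u^T *m S *m u) 0 0.

Definition is_orthogonal_mx {R : realType} (n : nat) (Q : 'M[R]_n) : Prop :=
  Q *m Q^T = 1%:M /\ Q^T *m Q = 1%:M.

Definition random_vector {dT : measure_display} {T : measurableType dT}
  {R : realType} (n : nat) (Y : T -> 'cV[R]_n) : Prop :=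
  forall i, measurable_fun setT (fun w => Y w i 0).

(* Y ~ N(0, S) (S positive definite): every nonzero linear functional
   u^T Y is real normal with mean 0 and variance u^T S u
   (the standard Cramer-Wold definition of the multivariate Gaussian). *)
Definition gaussian0 {dT : measure_display} {T : measurableType dT}
  {R : realType} (P : probability T R) (n : nat) (Y : T -> 'cV[R]_n)
  (S : 'M[R]_n) : Prop :=
  random_vector Y /\
  forall u : 'cV[R]_n, u != 0 -> forall A : set R, measurable A ->
    P [set w | (u^T *m Y w) 0 0 \in A] =
    normal_prob 0 (Num.sqrt ((u^T *m S *m u) 0 0)) A.

(* Main.v *)
Require Import Defs.
From HB Require Import structures.
From mathcomp Require Import all_boot all_order all_algebra.
From mathcomp Require Import all_classical all_reals all_analysis.
From mathcomp Require Import measurable_realfun ring lra.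
Import Order.TTheory GRing.Theory Num.Theory.
Local Open Scope classical_set_scope.
Local Open Scope ring_scope.

Lemma normal_itv_le (R : realType) (s e : R) : s != 0 -> 0 <= e ->
  (normal_prob 0 s `[(- e)%R, e] <= (2 * e * normal_peak s)%:E)%E.
Proof.
move=> s0 e0; rewrite /normal_prob.
apply: (@le_trans _ _ (\int[lebesgue_measure]_(x in `[(- e)%R, e]) (normal_peak s)%:E))%E.
  apply: ge0_le_integral => //=.
  - by move=> x _; rewrite lee_fin normal_pdf_ge0.
  - apply/measurable_EFinP; apply/measurable_funTS; exact: measurable_normal_pdf.
  - by move=> x _; rewrite lee_fin normal_pdf_ub.
rewrite integral_cst //= lebesgue_measure_itv /=.
case: ifPn => h.
  rewrite -EFinD -EFinM lee_fin opprK (_ : e + e = 2 * e); last by ring.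
  by rewrite mulrC.
by rewrite mule0 lee_fin !mulr_ge0 ?normal_peak_ge0.
Qed.

Lemma union_le {d} {T : measurableType d} {R : realType} (mu : {measure set T -> \bar R})
  {I : Type} (s : seq I) (A : I -> set T) :
  (forall i, measurable (A i)) ->
  (mu (\big[setU/set0]_(i <- s) A i) <= \sum_(i <- s) mu (A i))%E.
Proof.
move=> mA; elim: s => [|a s IH]; first by rewrite !big_nil measure0.
rewrite !big_cons; apply: le_trans (measureU2 _ _ _) _ => //.
  by apply: bigsetU_measurable.
by apply: leeD.
Qed.
Lemma rv_lin {dT : measure_display} {T : measurableType dT} {R : realType}
  (m n : nat) (M : 'M[R]_(m, n)) (Y : T -> 'cV[R]_n) (i : 'I_m) :
  random_vector Y -> measurable_fun setT (fun w => (M *m Y w) i 0).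
Proof.
move=> hY.
rewrite (_ : (fun w => _) = (fun w => \sum_k M i k * Y w k 0)); last first.
  by apply/funext => w; rewrite mxE.
apply: measurable_sum => k; apply: measurable_funM => //.
Qed.

Lemma cs_bound (R : realType) (n : nat) (a b : 'I_n -> R) (e : R) :
  0 < e -> \sum_k a k ^+ 2 = 1 -> \sum_k b k ^+ 2 <= e ^+ 2 ->
  `|\sum_k a k * b k| <= e.
Proof.
move=> e0 ha.
have key : forall b : 'I_n -> R, \sum_k b k ^+ 2 <= e ^+ 2 -> \sum_k a k * b k <= e.
  move=> {}b hb.
  have : 2 * e * (\sum_k a k * b k) <= 2 * e * e.
    rewrite mulr_sumr.
    apply: (@le_trans _ _ (\sum_k (e ^+ 2 * a k ^+ 2 + b k ^+ 2))).
      apply: ler_sum => k _.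
      have := sqr_ge0 (e * a k - b k); lra.
    rewrite big_split /= -mulr_sumr ha; lra.
  by rewrite ler_pM2l //; lra.
move=> hb; rewrite ler_norml; apply/andP; split; last exact: key.
rewrite lerNl -sumrN.
under eq_bigr => k _ do rewrite -mulrN.
apply: key; under eq_bigr => k _ do rewrite sqrrN; exact: hb.
Qed.

Lemma sgn_diff (R : realType) (a b e : R) :
  sgn a != sgn b -> `|a - b| <= e -> `|a| <= e.
Proof.
rewrite /sgn; case: (lerP 0 a) => ha; case: (lerP 0 b) => hb;
  rewrite ?eqxx // => _; rewrite !ler_norml => /andP [h1 h2]; apply/andP; split; lra.
Qed.

Lemma delta_entry (R : realType) (n : nat) (A : 'M[R]_n) (i j : 'I_n) :
  (delta_mx 0 i *m A *m delta_mx j 0) (0 : 'I_1) (0 : 'I_1) = A i j.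
Proof. by rewrite -rowE -colE !mxE. Qed.

Lemma mem_bigsetU {T : Type} {I : eqType} (s : seq I) (F : I -> set T) (w : T) :
  (\big[setU/set0]_(i <- s) F i) w <-> exists i, i \in s /\ F i w.
Proof.
elim: s => [|a s IH]; first by rewrite big_nil; split => // -[i []].
rewrite big_cons; split.
  case => [h|/IH [i [hi h]]]; first by exists a; rewrite mem_head.
  by exists i; rewrite in_cons hi orbT.
move=> [i []]; rewrite in_cons => /orP [/eqP -> h|hi h]; first by left.
by right; apply/IH; exists i.
Qed.

Lemma sign_vec_entry (R : realType) (n : nat) (v : 'cV[R]_n) i :
  sign_vec v i 0 = sgn (v i 0).
Proof. by rewrite /sign_vec mxE. Qed.

Lemma cv_subE (R : realType) (n : nat) (A B : 'cV[R]_n) i :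
  (A - B) i 0 = A i 0 - B i 0.
Proof. by rewrite !mxE. Qed.

Lemma mul_entry (R : realType) (m n : nat) (M : 'M[R]_(m, n)) (v : 'cV[R]_n) i :
  (M *m v) i 0 = \sum_k M i k * v k 0.
Proof. by rewrite mxE. Qed.
Theorem theorem2 (R : realType) (c d : nat) (hc : (1 <= c)%N) (hcd : (c <= d)%N)
  (W : 'M[R]_(c, d)) (hW : W *m W^T = 1%:M)
  (Sigma : 'M[R]_c) (hS : is_pos_def Sigma)
  (Q : 'M[R]_c) (hQ : is_orthogonal_mx Q)
  (hdiag : forall i : 'I_c, (Q *m Sigma *m Q^T) i i = \tr Sigma / c%:R)
  (eps : R) (heps : 0 < eps)
  (dT : measure_display) (T : measurableType dT) (P : probability T R)
  (x1 x2 : T -> 'cV[R]_d)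
  (hx1 : random_vector x1) (hx2 : random_vector x2)
  (hg1 : gaussian0 P (fun w => W *m x1 w) Sigma)
  (hg2 : gaussian0 P (fun w => W *m x2 w) Sigma)
  (hclose : {ae P, forall w, norm2 (x1 w - x2 w) <= eps}) :
  (P [set w | (0 < dist_H (sign_vec (Q *m W *m x1 w))
                          (sign_vec (Q *m W *m x2 w)))%N]
   <= (2 * eps * Num.sqrt (2 / pi) * (c%:R * Num.sqrt c%:R)
       * (Num.sqrt (\tr Sigma))^-1)%:E)%E.
Proof.
set M := Q *m W.
have hM : M *m M^T = 1%:M.
  by rewrite /M trmx_mul mulmxA -(mulmxA Q W) hW mulmx1 hQ.1.
have hrow : forall i, \sum_k M i k ^+ 2 = 1.
  move=> i; have := congr1 (fun A : 'M[R]_c => A i i) hM; rewrite /= !mxE eqxx /=.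
  move=> h; rewrite -[RHS]h; apply: eq_bigr => k _.
  by rewrite expr2 [M^T k i]mxE.
pose u (i : 'I_c) : 'cV[R]_c := Q^T *m delta_mx i 0.
have hu0 : forall i, u i != 0.
  move=> i; apply/eqP => h; have := congr1 (mulmx Q) h.
  rewrite /u mulmxA hQ.1 mul1mx mulmx0 => /matrixP /(_ i 0); rewrite !mxE !eqxx /=.
  by move/eqP; rewrite oner_eq0.
have huS : forall i, ((u i)^T *m Sigma *m u i) 0 0 = \tr Sigma / c%:R.
  move=> i; rewrite /u trmx_mul trmxK trmx_delta !mulmxA -(hdiag i).
  by rewrite -(@delta_entry R c (Q *m Sigma *m Q^T) i i) !mulmxA.
have hpos : 0 < \tr Sigma / c%:R.
  by rewrite -(huS (Ordinal hc)); apply: hS.2.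
set sig := Num.sqrt (\tr Sigma / c%:R).
have hsig : sig != 0 by rewrite /sig gt_eqF // sqrtr_gt0.
have hconv : forall i (v : 'cV[R]_d), ((u i)^T *m (W *m v)) 0 0 = (M *m v) i 0.
  move=> i v; rewrite /u trmx_mul trmxK trmx_delta !mulmxA -rowE.
  by rewrite -!mulmxA -row_mul mxE.
pose A i := [set w | ((u i)^T *m (W *m x1 w)) 0 0 \in `[-eps, eps]%classic].
have mA : forall i, measurable (A i).
  move=> i; have := rv_lin _ _ M x1 i hx1 measurableT _ (measurable_itv `[-eps, eps]).
  rewrite setTI; congr measurable; apply/seteqP; split => w; rewrite /A /= hconv inE //=.
have PA : forall i, (P (A i) <= (2 * eps * normal_peak sig)%:E)%E.
  move=> i; have h := hg1.2 (u i) (hu0 i) _ (measurable_itv `[-eps, eps]).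
  rewrite /= in h; rewrite /A h huS.
  by apply: normal_itv_le => //; apply: ltW.
pose f1 i w := (M *m x1 w) i 0.
pose f2 i w := (M *m x2 w) i 0.
pose G : set R := `[0%R, +oo[%classic.
have mG : measurable G by exact: measurable_itv.
have mpre : forall (f : T -> R), measurable_fun setT f -> measurable (f @^-1` G).
  by move=> f mf; have := mf measurableT _ mG; rewrite setTI.
have mf1 : forall i, measurable (f1 i @^-1` G) by move=> i; apply/mpre/rv_lin.
have mf2 : forall i, measurable (f2 i @^-1` G) by move=> i; apply/mpre/rv_lin.
have n1 : (1 : R) != -1 by rewrite -subr_eq0 opprK -mulr2n pnatr_eq0.
pose S i := [set w | sgn (f1 i w) != sgn (f2 i w)].
have mS : forall i, measurable (S i).
  move=> i; rewrite (_ : S i = (f1 i @^-1` G `&` ~` (f2 i @^-1` G)) `|`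
                            (~` (f1 i @^-1` G) `&` f2 i @^-1` G)).
    by apply: measurableU; apply: measurableI => //; apply: measurableC.
  apply/seteqP; split => w; rewrite /S /G /= /sgn !in_itv /= !andbT;
  case: (0 <= f1 i w); case: (0 <= f2 i w) => //=;
  first [ by rewrite eqxx | by move=> _; left | by move=> _; right | by case => -[]
        | by move=> _; rewrite n1 | by move=> _; rewrite eq_sym n1 ].
set E := [set w | _].
have hE : E = \big[setU/set0]_(i < c) S i.
  apply/seteqP; split => w.
    rewrite /E /= /dist_H => /card_gt0P [i]; rewrite inE /= !sign_vec_entry => hi.
    by apply/mem_bigsetU; exists i; split => //; exact: mem_index_enum.
  move/mem_bigsetU => [i [_ hi]].
  rewrite /E /= /dist_H; apply/card_gt0P; exists i.
  by rewrite inE /= !sign_vec_entry.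
have mE : measurable E by rewrite hE; exact: bigsetU_measurable.
case: hclose => N [mN PN0 hN].
have mU : measurable (\big[setU/set0]_(i < c) A i) by exact: bigsetU_measurable.
apply: (@le_trans _ _ (P (N `|` \big[setU/set0]_(i < c) A i))).
  apply: le_measure; rewrite ?inE //; first exact: measurableU.
  move=> w hw; case: (pselect (N w)) => hNw; [by left | right].
  have hcl : norm2 (x1 w - x2 w) <= eps.
    by apply/negPn/negP => /negP h; exact/hNw/hN.
  move: hw; rewrite hE => /mem_bigsetU [i [_ hi]].
  apply/mem_bigsetU; exists i; split; first exact: mem_index_enum.
  rewrite /A /= hconv inE /= in_itv /= -ler_norml.
  have := @sgn_diff R ((M *m x1 w) i 0) ((M *m x2 w) i 0) eps hi; apply.
  rewrite -cv_subE -mulmxBr mul_entry.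
  have := @cs_bound R d (fun k => M i k) (fun k => (x1 w - x2 w) k 0) eps heps (hrow i); apply.
  move: hcl; rewrite /norm2.
  set s := \sum_(k < d) _.
  have s0 : 0 <= s by apply: sumr_ge0 => k _; exact: sqr_ge0.
  move=> hs.
  rewrite -(sqr_sqrtr s0); have := sqrtr_ge0 s; set r := Num.sqrt s => r0.
  have hr : r <= eps by []. nra.
rewrite (le_trans (measureU2 _ _ _)) //.
rewrite [X in (X + _)%E](_ : _ = 0%E); last exact: PN0.
rewrite add0e.
have := union_le P (index_enum _) A mA; move/le_trans; apply.
have := @lee_sum _ _ _ _ (index_enum 'I_c) xpredT (fun i _ => PA i); move/le_trans; apply.
rewrite sumEFin sumr_const card_ord lee_fin -(mulr_natl (2 * eps * normal_peak sig) c).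
have cpos : 0 < c%:R :> R by rewrite ltr0n.
have tpos : 0 < \tr Sigma.
  by have := mulr_gt0 hpos cpos; rewrite divfK // gt_eqF.
rewrite /normal_peak /sig sqr_sqrtr; last exact: ltW.
have pipos := pi_gt0 R.
set p := Num.sqrt (2 / pi).
set q := Num.sqrt c%:R.
set r := Num.sqrt (\tr Sigma).
set s := Num.sqrt (\tr Sigma / c%:R * pi *+ 2).
have p0 : 0 < p by rewrite sqrtr_gt0 divr_gt0.
have q0 : 0 < q by rewrite sqrtr_gt0.
have r0 : 0 < r by rewrite sqrtr_gt0.
have s0 : 0 < s by rewrite sqrtr_gt0 pmulrn_rgt0 // mulr_gt0.
have hpqs : p * q * s = 2 * r.
  rewrite /p /q /s /r -sqrtrM; last by rewrite divr_ge0 // ltW.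
  rewrite -sqrtrM; last by rewrite mulr_ge0 // ?divr_ge0 // ltW.
  rewrite (_ : 2 / pi * c%:R * (\tr Sigma / c%:R * pi *+ 2) = 2 ^+ 2 * \tr Sigma).
    by rewrite sqrtrM ?sqr_ge0 // sqrtr_sqr ger0_norm.
  rewrite -mulr_natr; move: pipos; generalize (@pi R) => pp pp0.
  by field; rewrite (lt0r_neq0 cpos) (lt0r_neq0 pp0).
have hs : s^-1 = p * q / (2 * r).
  rewrite -hpqs; field; rewrite !lt0r_neq0 //.
rewrite hs.
have X0 : 0 <= c%:R * eps * p * q / r.
  apply: divr_ge0 (ltW r0); apply: mulr_ge0 (ltW q0); apply: mulr_ge0 (ltW p0).
  exact: mulr_ge0 (ltW cpos) (ltW heps).
have -> : c%:R * (2 * eps * (p * q / (2 * r))) = c%:R * eps * p * q / r.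
  by field; rewrite lt0r_neq0.
have -> : 2 * eps * p * (c%:R * q) / r = 2 * (c%:R * eps * p * q / r).
  by field; rewrite lt0r_neq0.
lra.
Qed.
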